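(* Let $G,G'$ be finitely generated groups with word metrics $d,d'$ (from Cayley graphs with respect to finite generating sets), let $v_n$ and $v'_n$ be the cardinalities of the balls of radius $n$ around the identity in $G$ and $G'$, let $a:=\lim_n v_n^{1/n}$ and $a':=\lim_n (v'_n)^{1/n}$ be the growth rates, assume $a>1$ and $a'>1$, and set $c:=\log a/\log a'$. Then there exist a non-decreasing function $f:\mathbb Z_{\ge0}\to\mathbb Z_{\ge0}$ and a strictly increasing sequence $(r_j)_{j}$ in $\mathbb Z_{\ge0}$ such that, writing $r'_j:=f(r_j)$, $f(0)=0$, $\sup_n v'_{r'_n}/v_{r_n}<\infty$, $\inf_n v'_{r'_n}/v_{r_n}>0$, and $$\forall m\ \exists N\ \forall n\ge N:\quad |f(n+m)-f(n)-cm|\le 1.$$ *)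

(* Defs.v *)
From Stdlib Require Import Reals Lra List.
Import ListNotations.
Open Scope R_scope.

Record Group := {
  carrier :> Type;
  gmul : carrier -> carrier -> carrier;
  gone : carrier;
  ginv : carrier -> carrier;
  gmul_assoc : forall x y z, gmul x (gmul y z) = gmul (gmul x y) z;
  gmul_1l : forall x, gmul gone x = x;
  gmul_Vl : forall x, gmul (ginv x) x = gone
}.

Definition eval_word (G : Group) (w : list G) : G :=
  fold_right (gmul G) (gone G) w.

Definition gen_letter (G : Group) (S : list G) (x : G) : Prop :=
  In x S \/ In (ginv G x) S.

Definition generates (G : Group) (S : list G) : Prop :=
  forall x : G, exists w : list G, Forall (gen_letter G S) w /\ x = eval_word G w.

Definition in_ball (G : Group) (S : list G) (n : nat) (x : G) : Prop :=
  exists w : list G, (length w <= n)%nat /\ Forall (gen_letter G S) w /\ x = eval_word G w.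

Definition has_card (G : Type) (P : G -> Prop) (k : nat) : Prop :=
  exists l : list G, NoDup l /\ length l = k /\ forall x, P x <-> In x l.

(* Main.v *)
Require Import Defs.
From Stdlib Require Import Reals Lra Lia List ZArith IndefiniteDescription.
Import ListNotations.
Section Grp.
Variable G : Group.

Lemma g_mulV (x : G) : gmul G x (ginv G x) = gone G.
Proof.
  rewrite <- (gmul_1l G (gmul G x (ginv G x))).
  rewrite <- (gmul_Vl G (ginv G x)) at 1.
  rewrite <- gmul_assoc. rewrite (gmul_assoc G (ginv G x) x (ginv G x)).
  rewrite gmul_Vl, gmul_1l. apply gmul_Vl.
Qed.

Lemma g_mul1 (x : G) : gmul G x (gone G) = x.
Proof.
  rewrite <- (gmul_Vl G x), gmul_assoc, g_mulV. apply gmul_1l.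
Qed.

Lemma g_invinv (x : G) : ginv G (ginv G x) = x.
Proof.
  rewrite <- (g_mul1 (ginv G (ginv G x))).
  rewrite <- (gmul_Vl G x), gmul_assoc, gmul_Vl. apply gmul_1l.
Qed.

Lemma ball_one S n : in_ball G S n (gone G).
Proof. exists []. simpl. repeat split; auto. lia. Qed.

Lemma card_pos S n k : has_card G (in_ball G S n) k -> (1 <= k)%nat.
Proof.
  intros [l [_ [Hl H]]]. subst k. destruct l. 
  - destruct (proj1 (H (gone G)) (ball_one S n)).
  - simpl; lia.
Qed.

Lemma card_mono S n m k k' : (n <= m)%nat -> has_card G (in_ball G S n) k ->
  has_card G (in_ball G S m) k' -> (k <= k')%nat.
Proof.
  intros Hnm [l [Hd [Hl H]]] [l' [Hd' [Hl' H']]]. subst.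
  apply NoDup_incl_length; auto. intros x Hx. apply H'. apply H in Hx.
  destruct Hx as [w [Hw Hw']]. exists w. split; auto. lia.
Qed.

Lemma card_step Sg n k k' : has_card G (in_ball G Sg n) k ->
  has_card G (in_ball G Sg (S n)) k' -> (k' <= (2 * length Sg + 1) * k)%nat.
Proof.
  intros [l [Hd [Hl H]]] [l' [Hd' [Hl' H']]]. subst.
  pose (L := Sg ++ map (ginv G) Sg ++ [gone G]).
  assert (HL : length L = (2 * length Sg + 1)%nat).
  { unfold L. rewrite !length_app, length_map. simpl. lia. }
  rewrite <- HL, <- (length_prod L l), <- (length_map (fun p => gmul G (fst p) (snd p))).
  apply NoDup_incl_length; auto. intros x Hx. apply H' in Hx.
  destruct Hx as [w [Hw [Hf ->]]]. apply in_map_iff.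
  destruct w as [|s w].
  - exists (gone G, gone G). simpl. split. apply gmul_1l.
    apply in_prod. unfold L. apply in_or_app; right; apply in_or_app; right; simpl; auto.
    apply H, ball_one.
  - inversion Hf; subst. exists (s, eval_word G w). split. reflexivity.
    apply in_prod.
    + unfold L. destruct H2 as [H2|H2]. apply in_or_app; auto.
      apply in_or_app; right; apply in_or_app; left. apply in_map_iff.
      exists (ginv G s). split; auto. apply g_invinv.
    + apply H. exists w. simpl in Hw. repeat split; auto. lia.
Qed.
End Grp.
Open Scope R_scope.
Lemma ln_cont x : 0 < x -> continuity_pt ln x.
Proof. intros Hx. apply derivable_continuous_pt. exists (/x). now apply derivable_pt_lim_ln. Qed.

Lemma ln_le' x y : 0 < x -> x <= y -> ln x <= ln y.
Proof. intros Hx [H|H]. left; now apply ln_increasing. subst; lra. Qed.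

Lemma INR_v_pos (v : nat -> nat) n : (forall n, (1 <= v n)%nat) -> 1 <= INR (v n).
Proof. intros H. apply (le_INR 1), H. Qed.

Lemma logcv (v : nat -> nat) (a : R) : (forall n, (1 <= v n)%nat) ->
  Un_cv (fun n => Rpower (INR (v n)) (/ INR n)) a -> 0 < a ->
  forall eta, 0 < eta -> exists N, forall n, (N <= n)%nat ->
    INR n * (ln a - eta) <= ln (INR (v n)) <= INR n * (ln a + eta).
Proof.
  intros Hv Hcv Ha eta He.
  pose proof (continuity_seq ln _ _ (ln_cont a Ha) Hcv) as H.
  destruct (H eta He) as [N HN]. exists (S N). intros n Hn.
  specialize (HN n ltac:(lia)). unfold R_dist in HN. rewrite ln_Rpower in HN.
  assert (Hn0 : 0 < INR n) by (apply lt_0_INR; lia).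
  apply Rabs_def2 in HN.
  assert (E : ln (INR (v n)) = INR n * (/ INR n * ln (INR (v n)))) by (field; lra).
  rewrite E. split; apply Rmult_le_compat_l; lra.
Qed.

Lemma unb (v : nat -> nat) (L : R) : (forall n, (1 <= v n)%nat) -> 0 < L ->
  (forall eta, 0 < eta -> exists N, forall n, (N <= n)%nat ->
    INR n * (L - eta) <= ln (INR (v n)) <= INR n * (L + eta)) ->
  forall X, exists N, forall n, (N <= n)%nat -> X < INR (v n).
Proof.
  intros Hv HL H X.
  destruct (H (L/2) ltac:(lra)) as [N1 HN1].
  destruct (Rle_lt_dec X 0) as [HX|HX].
  { exists O. intros n _. pose proof (INR_v_pos v n Hv). lra. }
  destruct (INR_unbounded (2 * ln X / L)) as [n0 Hn0].
  exists (max N1 n0). intros n Hn.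
  specialize (HN1 n ltac:(lia)).
  assert (INR n0 <= INR n) by (apply le_INR; lia).
  pose proof (INR_v_pos v n Hv).
  apply ln_lt_inv; try lra.
  assert (2 * ln X < INR n * L).
  { apply Rmult_lt_reg_r with (/L). apply Rinv_0_lt_compat; lra.
    replace (INR n * L * / L) with (INR n) by (field; lra). unfold Rdiv in Hn0. lra. }
  lra.
Qed.
Lemma alg (L L' eps eta K r: R): 0<L -> 0<L' -> 0<eps -> 0<eta -> eta <= L'/2 ->
  eta*(L+L') <= eps*(L'*L')/4 -> 2/eps <= r ->
  K*(L'-eta) <= r*(L+eta) -> r*(L-eta) <= (K+1)*(L'+eta) ->
  Rabs (K - L/L' * r) <= eps*r.
Proof.
  intros HL HL' He Heta Heta2 Heta3 Hr H1 H2.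
  assert (Hr0 : 0 < r). { apply Rlt_le_trans with (2/eps); auto. apply Rdiv_lt_0_compat; lra. }
  assert (Her : 2 <= eps * r).
  { apply Rmult_le_compat_l with (r:=eps) in Hr; [|lra].
    replace (eps * (2/eps)) with 2 in Hr by (field; lra). lra. }
  assert (U : (K - L/L'*r) * (L'*(L'-eta)) <= eps*r*(L'*(L'-eta))).
  { replace ((K - L/L'*r) * (L'*(L'-eta))) with (K*(L'-eta)*L' - r*L*(L'-eta)) by (field; lra).
    assert (L'*L'/4 <= L'*(L'-eta)) by nra.
    assert (0 < eps*r) by nra.
    assert (eps*(L'*L')/4 * r <= eps*r*(L'*(L'-eta))) by nra.
    nra. }
  assert (D : (L/L'*r - K - 1) * (L'*(L'+eta)) <= eps*r/4*(L'*(L'+eta))).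
  { replace ((L/L'*r - K - 1) * (L'*(L'+eta))) with (r*L*(L'+eta) - (K+1)*(L'+eta)*L') by (field; lra).
    assert (L'*L' <= L'*(L'+eta)) by nra.
    assert (0 < eps*r) by nra.
    assert (eps*(L'*L')/4 * r <= eps*r/4*(L'*(L'+eta))) by nra.
    nra. }
  apply Rmult_le_reg_r in U; [|nra].
  apply Rmult_le_reg_r in D; [|nra].
  apply Rabs_le. split; lra.
Qed.

Lemma Kexist (v' : nat -> nat) (T : nat) :
  forall k, (T < v' k)%nat -> (v' O <= T)%nat -> exists K, (v' K <= T < v' (S K))%nat.
Proof.
  induction k as [|k IH]; intros H1 H2. lia.
  destruct (Nat.lt_ge_cases T (v' k)) as [H|H]. now apply IH. exists k; lia.
Qed.

Lemma partA (v v' : nat -> nat) (L L' : R) :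
  (forall n, (1 <= v n)%nat) -> (forall n, (1 <= v' n)%nat) ->
  (forall n m, (n <= m)%nat -> (v n <= v m)%nat) ->
  (forall n m, (n <= m)%nat -> (v' n <= v' m)%nat) -> 0 < L -> 0 < L' ->
  (forall eta, 0 < eta -> exists N, forall n, (N <= n)%nat ->
    INR n * (L - eta) <= ln (INR (v n)) <= INR n * (L + eta)) ->
  (forall eta, 0 < eta -> exists N, forall n, (N <= n)%nat ->
    INR n * (L' - eta) <= ln (INR (v' n)) <= INR n * (L' + eta)) ->
  exists (K : nat -> nat) (R0 : nat),
    (forall r, (R0 <= r)%nat -> (v' (K r) <= v r < v' (S (K r)))%nat) /\
    (forall r r', (R0 <= r)%nat -> (r <= r')%nat -> (K r <= K r')%nat) /\
    (forall eps, 0 < eps -> exists R, forall r, (R <= r)%nat ->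
       Rabs (INR (K r) - L / L' * INR r) <= eps * INR r).
Proof.
  intros Hv Hv' Hm Hm' HL HL' Hg Hg'.
  pose proof (unb v L Hv HL Hg) as Uv.
  pose proof (unb v' L' Hv' HL' Hg') as Uv'.
  assert (HK : forall T, exists k, (v' O <= T)%nat -> (v' k <= T < v' (S k))%nat).
  { intros T. destruct (Uv' (INR T)) as [N HN]. specialize (HN N (le_n _)).
    apply INR_lt in HN.
    destruct (Nat.le_gt_cases (v' O) T) as [H|H].
    - destruct (Kexist v' T N HN H) as [K HK]. exists K; auto.
    - exists O; intros; lia. }
  apply functional_choice in HK as [Kf HKf].
  destruct (Uv (INR (v' O))) as [R0 HR0].
  assert (HK1 : forall r, (R0 <= r)%nat -> (v' (Kf (v r)) <= v r < v' (S (Kf (v r))))%nat).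
  { intros r Hr. apply HKf. specialize (HR0 r Hr). apply INR_lt in HR0. lia. }
  exists (fun r => Kf (v r)), R0. split; [exact HK1|split].
  - intros r r' Hr Hrr'. pose proof (HK1 r Hr). pose proof (HK1 r' ltac:(lia)).
    pose proof (Hm r r' Hrr').
    destruct (Nat.le_gt_cases (Kf (v r)) (Kf (v r'))) as [Hq|Hq]; auto.
    pose proof (Hm' (S (Kf (v r'))) (Kf (v r)) Hq). lia.
  - intros eps Heps.
    set (eta := Rmin (L'/2) (eps*(L'*L')/(4*(L+L')))).
    assert (Heta : 0 < eta).
    { unfold eta. apply Rmin_glb_lt. lra. apply Rdiv_lt_0_compat; [apply Rmult_lt_0_compat; [lra| apply Rmult_lt_0_compat; lra] | lra]. }
    assert (Heta2 : eta <= L'/2) by apply Rmin_l.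
    assert (Heta3 : eta*(L+L') <= eps*(L'*L')/4).
    { assert (eta <= eps*(L'*L')/(4*(L+L'))) by apply Rmin_r.
      apply Rmult_le_compat_r with (r:=L+L') in H; [|lra].
      replace (eps * (L' * L') / (4 * (L + L')) * (L + L')) with (eps*(L'*L')/4) in H
        by (field; lra). exact H. }
    destruct (Hg eta Heta) as [N1 HN1].
    destruct (Hg' eta Heta) as [N2 HN2].
    destruct (Uv (INR (v' N2))) as [R2 HR2].
    destruct (INR_unbounded (2/eps)) as [R3 HR3].
    exists (R0 + N1 + R2 + R3)%nat. intros r Hr.
    destruct (HK1 r ltac:(lia)) as [Ka Kb].
    assert (HKN : (N2 <= Kf (v r))%nat).
    { specialize (HR2 r ltac:(lia)). apply INR_lt in HR2.
      destruct (Nat.le_gt_cases N2 (Kf (v r))) as [H|H]; auto.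
      pose proof (Hm' (S (Kf (v r))) N2 H). lia. }
    set (K := Kf (v r)) in *.
    specialize (HN1 r ltac:(lia)). pose proof (HN2 K HKN) as HA. pose proof (HN2 (S K) ltac:(lia)) as HB.
    rewrite S_INR in HB.
    apply le_INR in Ka. apply lt_INR in Kb.
    pose proof (INR_v_pos v' K Hv'). pose proof (INR_v_pos v r Hv).
    apply ln_le' in Ka; [|lra]. apply ln_increasing in Kb; [|lra].
    apply (alg L L' eps eta); try lra.
    assert (INR R3 <= INR r) by (apply le_INR; lia). lra.
Qed.
Lemma Rabs_le_inv a b : Rabs a <= b -> -b <= a <= b.
Proof. unfold Rabs; destruct (Rcase_abs a); lra. Qed.

Lemma floor_lemma (t : R) : exists d, 0 < d /\ forall x y, Rabs (y - x - t) <= d ->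
  Rabs (IZR (Int_part y) - IZR (Int_part x) - t) <= 1.
Proof.
  set (q := Int_part t). set (phi := t - IZR q).
  destruct (base_Int_part t) as [Q1 Q2]. fold q in Q1, Q2.
  assert (exists d, 0 < d /\ d <= 1 - phi /\ (phi = 0 \/ d <= phi)) as [d [Hd [Hd1 Hd2]]].
  { destruct (Req_dec phi 0) as [E|E].
    - exists (1/2). unfold phi in *. split; [lra|split; [lra|left; lra]].
    - assert (0 < phi). { unfold phi in *. destruct Q1 as [Q1|Q1]. lra. exfalso; apply E; lra. }
      exists (Rmin phi (1-phi) / 2).
      assert (Rmin phi (1-phi) <= phi) by apply Rmin_l.
      assert (Rmin phi (1-phi) <= 1-phi) by apply Rmin_r.
      assert (0 < Rmin phi (1-phi)) by (apply Rmin_glb_lt; unfold phi in *; lra).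
      unfold phi in *. split; [lra|split; [lra|right; lra]]. }
  exists d. split; auto. intros x y Hxy.
  destruct (base_Int_part x) as [X1 X2]. destruct (base_Int_part y) as [Y1 Y2].
  apply Rabs_le_inv in Hxy. apply Rabs_le.
  set (z := (Int_part y - Int_part x)%Z).
  assert (Ez : IZR (Int_part y) - IZR (Int_part x) = IZR z) by (unfold z; rewrite minus_IZR; ring).
  rewrite Ez.
  assert (Z1 : IZR z < t + d + 1) by lra.
  assert (Z2 : t - d - 1 < IZR z) by lra.
  destruct (Z_lt_le_dec z (q - 1)) as [H|H].
  { assert (IZR z <= IZR q - 2).
    { assert (z <= q - 2)%Z by lia. apply IZR_le in H0. rewrite minus_IZR in H0. exact H0. }
    unfold phi in *. lra. }
  destruct (Z.eq_dec z (q - 1)) as [E|E].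
  { assert (IZR z = IZR q - 1) by (rewrite E, minus_IZR; reflexivity).
    unfold phi in *. destruct Hd2; lra. }
  destruct (Z_lt_le_dec z (q + 2)) as [H2|H2].
  { assert (z = q \/ z = q + 1)%Z as [E'|E'] by lia; subst z; rewrite E';
    [|rewrite plus_IZR]; unfold phi in *; lra. }
  apply IZR_le in H2. rewrite plus_IZR in H2. unfold phi in *. lra.
Qed.

Lemma sbound (j R R1 k k1 KR c : R): 1 <= j -> 0 <= R -> 0 <= k <= KR -> 0 < c ->
  (j+1)*(R+KR+1) <= R1 -> Rabs (k1 - c*R1) <= / (j+1) * R1 ->
  Rabs ((k1-k)/(R1-R) - c) <= (2+c)/j.
Proof.
  intros Hj HR Hk Hc H1 H2.
  assert (HD : R < R1) by nra.
  set (D := R1 - R).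
  assert (E : (k1-k)/D - c = ((k1 - c*R1) - (k - c*R)) / D) by (unfold D; field; lra).
  rewrite E. unfold Rdiv at 1. rewrite Rabs_mult, Rabs_inv, (Rabs_right D) by (unfold D; lra).
  assert (HY : Rabs (k - c*R) <= k + c*R) by (apply Rabs_le; nra).
  assert (HRK : R + KR <= R1/(j+1)).
  { apply Rmult_le_reg_r with (j+1); [lra|]. replace (R1/(j+1)*(j+1)) with R1 by (field; lra). nra. }
  assert (HXY : Rabs ((k1 - c*R1) - (k - c*R)) <= (2+c) * (R1 / (j+1))).
  { unfold Rminus at 1. eapply Rle_trans. apply Rabs_triang. rewrite Rabs_Ropp.
    assert (/ (j+1) * R1 = R1/(j+1)) by (unfold Rdiv; ring).
    assert (k + c*R <= (1+c)*(R1/(j+1))) by nra.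
    nra. }
  assert (HDj : R1 / (j+1) <= D / j).
  { unfold D. apply Rmult_le_reg_r with (j*(j+1)); [nra|].
    replace (R1/(j+1)*(j*(j+1))) with (R1*j) by (field; lra).
    replace ((R1-R)/j*(j*(j+1))) with ((R1-R)*(j+1)) by (field; lra). nra. }
  assert (0 < D) by (unfold D; lra).
  apply Rmult_le_reg_r with D; [lra|]. rewrite Rmult_assoc, Rinv_l by lra.
  replace ((2+c)/j*D) with ((2+c)*(D/j)) by (field; lra).
  assert ((2+c) * (R1/(j+1)) <= (2+c)*(D/j)) by (apply Rmult_le_compat_l; lra).
  lra.
Qed.

Fixpoint rseq (R0 : nat) (Rf K : nat -> nat) (j : nat) : nat :=
  match j with
  | O => O
  | S j' => (R0 + Rf j' + S j' * (rseq R0 Rf K j' + K (rseq R0 Rf K j') + 1))%nat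
  end.

Fixpoint hseq (sg : nat -> R) (n : nat) : R :=
  match n with O => 0 | S n' => hseq sg n' + sg n' end.

Lemma partB (v v' : nat -> nat) (C : nat) (c : R) (K : nat -> nat) (R0 : nat) :
  (forall n, (1 <= v n)%nat) -> (forall n, (1 <= v' n)%nat) -> 0 < c -> (1 <= C)%nat ->
  (forall k, (v' (S k) <= C * v' k)%nat) ->
  (forall r, (R0 <= r)%nat -> (v' (K r) <= v r < v' (S (K r)))%nat) ->
  (forall r r', (R0 <= r)%nat -> (r <= r')%nat -> (K r <= K r')%nat) ->
  (forall eps, 0 < eps -> exists R, forall r, (R <= r)%nat ->
       Rabs (INR (K r) - c * INR r) <= eps * INR r) ->
  exists (f : nat -> nat) (r : nat -> nat),
    (forall n m, (n <= m)%nat -> (f n <= f m)%nat) /\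
    (forall n m, (n < m)%nat -> (r n < r m)%nat) /\
    f 0%nat = 0%nat /\
    (exists M : R, forall n, INR (v' (f (r n))) / INR (v (r n)) <= M) /\
    (exists eps : R, 0 < eps /\ forall n, eps <= INR (v' (f (r n))) / INR (v (r n))) /\
    (forall m : nat, exists N : nat, forall n : nat, (N <= n)%nat ->
       Rabs (INR (f (n + m)%nat) - INR (f n) - c * INR m) <= 1).
Proof.
  intros Hv Hv' Hc HC HvC HK HKm Hasy.
  assert (HRf : forall j, exists R, forall r, (R <= r)%nat ->
     Rabs (INR (K r) - c * INR r) <= / (INR j + 1) * INR r).
  { intros j. apply Hasy. apply Rinv_0_lt_compat. pose proof (pos_INR j). lra. }
  apply functional_choice in HRf as [Rf HRf].
  set (r := rseq R0 Rf K).
  assert (HrS : forall j, r (S j) = (R0 + Rf j + S j * (r j + K (r j) + 1))%nat) by reflexivity.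
  assert (Hr0 : r O = O) by reflexivity.
  assert (Hrstep : forall j, (r j < r (S j))%nat). { intros j. rewrite HrS. nia. }
  assert (Hrlt : forall n m, (n < m)%nat -> (r n < r m)%nat).
  { intros n m Hnm. induction m. lia. destruct (Nat.eq_dec n m). subst; auto.
    specialize (IHm ltac:(lia)). specialize (Hrstep m). lia. }
  assert (Hrle : forall n m, (n <= m)%nat -> (r n <= r m)%nat).
  { intros n m Hnm. destruct (Nat.eq_dec n m). subst; lia. specialize (Hrlt n m ltac:(lia)). lia. }
  assert (HrR0 : forall j, (R0 <= r (S j))%nat). { intros j. rewrite HrS. lia. }
  set (k := fun j => match j with O => O | S _ => K (r j) end).
  assert (Hkstep : forall j, (k j <= k (S j))%nat).
  { intros [|j]; simpl. lia. apply HKm; auto. }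
  assert (HkK : forall j, (k j <= K (r j))%nat). { intros [|j]; simpl; lia. }
  set (s := fun j => (INR (k (S j)) - INR (k j)) / (INR (r (S j)) - INR (r j))).
  assert (Hs0 : forall j, 0 <= s j).
  { intros j. unfold s. apply Rmult_le_pos.
    - pose proof (le_INR _ _ (Hkstep j)). lra.
    - left. apply Rinv_0_lt_compat. pose proof (lt_INR _ _ (Hrstep j)). lra. }
  assert (Hsb : forall j, (1 <= j)%nat -> Rabs (s j - c) <= (2 + c) / INR j).
  { intros j Hj. unfold s.
    apply sbound with (KR := INR (K (r j))).
    - apply (le_INR 1); auto.
    - apply pos_INR.
    - split. apply pos_INR. apply le_INR, HkK.
    - exact Hc.
    - assert (H := le_INR _ _ (Nat.le_trans _ _ _ (Nat.le_add_l (S j * (r j + K (r j) + 1)) (R0 + Rf j)) (Nat.eq_le_incl _ _ (eq_sym (HrS j))))).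
      rewrite mult_INR, !plus_INR, S_INR in H. simpl in H. lra.
    - apply HRf. rewrite HrS. lia. }
  assert (Hidx : forall i, exists j, (r j <= i < r (S j))%nat).
  { induction i.
    - exists O. rewrite Hr0. specialize (Hrstep O). lia.
    - destruct IHi as [j Hj]. destruct (Nat.eq_dec (S i) (r (S j))).
      + exists (S j). specialize (Hrstep (S j)). lia.
      + exists j. lia. }
  apply functional_choice in Hidx as [idx Hidx].
  assert (Hidxu : forall i j, (r j <= i < r (S j))%nat -> idx i = j).
  { intros i j Hj. specialize (Hidx i).
    destruct (Nat.lt_total (idx i) j) as [H|[H|H]]; auto.
    - specialize (Hrle (S (idx i)) j H). lia.
    - specialize (Hrle (S j) (idx i) H). lia. }
  assert (HidxJ : forall J i, (r J <= i)%nat -> (J <= idx i)%nat).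
  { intros J i Hi. specialize (Hidx i). destruct (Nat.le_gt_cases J (idx i)); auto.
    specialize (Hrle (S (idx i)) J H). lia. }
  set (sg := fun i => s (idx i)).
  set (h := hseq sg).
  assert (HhS : forall n, h (S n) = h n + sg n) by reflexivity.
  assert (Hpiece : forall j, h (r j) = INR (k j) -> forall t, (t <= r (S j) - r j)%nat -> h (r j + t)%nat = INR (k j) + s j * INR t).
  { intros j H0 t. induction t; intros Ht.
    - rewrite Nat.add_0_r. simpl. rewrite H0. ring.
    - rewrite Nat.add_succ_r, HhS, IHt by lia. unfold sg.
      rewrite (Hidxu _ j) by (specialize (Hrstep j); lia). rewrite S_INR. ring. }
  assert (Hhk : forall j, h (r j) = INR (k j)).
  { induction j. rewrite Hr0. reflexivity.
    specialize (Hrstep j).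
    replace (r (S j)) with (r j + (r (S j) - r j))%nat at 1 by lia.
    rewrite (Hpiece j IHj) by lia. unfold s. rewrite minus_INR by lia.
    field. pose proof (lt_INR _ _ Hrstep). lra. }
  assert (Hhmono : forall n m, (n <= m)%nat -> h n <= h m).
  { intros n m Hnm. induction Hnm. lra. rewrite HhS. specialize (Hs0 (idx m)). unfold sg. lra. }
  assert (Hh0 : forall n, 0 <= h n).
  { intros n. apply (Hhmono O n). lia. }
  assert (Hdiff : forall J, (1 <= J)%nat -> forall n, (r J <= n)%nat -> forall m,
     Rabs (h (n + m)%nat - h n - c * INR m) <= INR m * ((2 + c) / INR J)).
  { intros J HJ n Hn. induction m.
    - rewrite Nat.add_0_r. simpl. replace (h n - h n - c * 0) with 0 by ring.
      rewrite Rabs_R0. lra.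
    - rewrite Nat.add_succ_r, HhS, S_INR.
      replace (h (n + m)%nat + sg (n + m)%nat - h n - c * (INR m + 1)) with
        ((h (n + m)%nat - h n - c * INR m) + (sg (n+m)%nat - c)) by ring.
      eapply Rle_trans. apply Rabs_triang.
      assert (Rabs (sg (n + m)%nat - c) <= (2 + c) / INR J).
      { unfold sg. pose proof (HidxJ J (n+m)%nat ltac:(lia)) as HI.
        eapply Rle_trans. apply Hsb. lia.
        apply Rmult_le_compat_l. lra. apply Rinv_le_contravar.
        apply (lt_INR 0); lia. apply le_INR; auto. }
      lra. }
  set (f := fun n => Z.to_nat (Int_part (h n))).
  assert (Hf : forall n, INR (f n) = IZR (Int_part (h n))).
  { intros n. unfold f. rewrite INR_IZR_INZ, Z2Nat.id. reflexivity.
    destruct (base_Int_part (h n)). specialize (Hh0 n).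
    assert (-1 < IZR (Int_part (h n))) by lra. apply lt_IZR in H1. lia. }
  assert (Hfk : forall j, f (r j) = k j).
  { intros j. unfold f. rewrite Hhk, Int_part_INR. apply Nat2Z.id. }
  exists f, r. split; [|split; [exact Hrlt|split; [|split; [|split]]]].
  - intros n m Hnm. apply INR_le. rewrite !Hf. apply IZR_le.
    pose proof (Hhmono n m Hnm). destruct (base_Int_part (h n)), (base_Int_part (h m)).
    destruct (Z.le_gt_cases (Int_part (h n)) (Int_part (h m))) as [Hq|Hq]; auto.
    assert (Int_part (h m) + 1 <= Int_part (h n))%Z as Hq' by lia. apply IZR_le in Hq'.
    rewrite plus_IZR in Hq'. lra.
  - rewrite <- Hr0, Hfk. reflexivity.
  - exists (INR (v' O) + 1). intros [|j].
    + rewrite Hr0, <- Hr0, Hfk. simpl k. rewrite Hr0.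
      pose proof (le_INR _ _ (Hv O)). pose proof (le_INR _ _ (Hv' O)). simpl in *.
      apply Rmult_le_reg_r with (INR (v O)). lra.
      unfold Rdiv. rewrite Rmult_assoc, Rinv_l by lra. nra.
    + rewrite Hfk. simpl k. destruct (HK (r (S j)) (HrR0 j)) as [H1 H2].
      pose proof (le_INR _ _ H1). pose proof (le_INR _ _ (Hv (r (S j)))). simpl in *.
      pose proof (pos_INR (v' O)).
      apply Rmult_le_reg_r with (INR (v (r (S j)))). lra.
      unfold Rdiv. rewrite Rmult_assoc, Rinv_l by lra. nra.
  - pose proof (le_INR _ _ (Hv O)). pose proof (le_INR _ _ HC). simpl in *.
    exists (Rmin (/ INR C) (/ INR (v O))). split.
    { apply Rmin_glb_lt; apply Rinv_0_lt_compat; lra. }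
    intros [|j].
    + rewrite Hr0, <- Hr0, Hfk. simpl k. rewrite Hr0.
      pose proof (le_INR _ _ (Hv' O)). simpl in *.
      eapply Rle_trans. apply Rmin_r. unfold Rdiv.
      rewrite <- (Rmult_1_l (/ INR (v O))) at 1.
      apply Rmult_le_compat_r. left; apply Rinv_0_lt_compat; lra. lra.
    + rewrite Hfk. simpl k. destruct (HK (r (S j)) (HrR0 j)) as [H1 H2].
      pose proof (HvC (K (r (S j)))).
      assert (HH : (v (r (S j)) <= C * v' (K (r (S j))))%nat) by lia.
      apply le_INR in HH. rewrite mult_INR in HH.
      pose proof (le_INR _ _ (Hv (r (S j)))). simpl in *.
      eapply Rle_trans. apply Rmin_l.
      apply Rmult_le_reg_r with (INR C * INR (v (r (S j)))). nra.
      replace (/ INR C * (INR C * INR (v (r (S j))))) with (INR (v (r (S j)))) by (field; lra).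
      replace (INR (v' (K (r (S j)))) / INR (v (r (S j))) * (INR C * INR (v (r (S j)))))
        with (INR C * INR (v' (K (r (S j))))) by (field; lra). lra.
  - intros m. destruct (floor_lemma (c * INR m)) as [d [Hd Hfl]].
    destruct (INR_unbounded (INR m * (2 + c) / d)) as [J0 HJ0].
    exists (r (S J0)). intros n Hn. rewrite !Hf. apply Hfl.
    eapply Rle_trans. apply (Hdiff (S J0)); auto. lia.
    assert (0 < INR (S J0)) by (apply (lt_INR 0); lia).
    rewrite S_INR in *.
    apply Rmult_le_reg_r with (INR J0 + 1). lra.
    replace (INR m * ((2 + c) / (INR J0 + 1)) * (INR J0 + 1)) with (INR m * (2 + c)) by (field; lra).
    apply Rmult_lt_compat_l with (r := d) in HJ0; auto.
    replace (d * (INR m * (2 + c) / d)) with (INR m * (2+c)) in HJ0 by (field; lra). lra.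
Qed.

Theorem lemma3p1
  (G G' : Group) (S : list G) (S' : list G')
  (hS : generates G S) (hS' : generates G' S')
  (v v' : nat -> nat)
  (hv : forall n, has_card G (in_ball G S n) (v n))
  (hv' : forall n, has_card G' (in_ball G' S' n) (v' n))
  (a a' : R)
  (ha : Un_cv (fun n => Rpower (INR (v n)) (/ INR n)) a)
  (ha' : Un_cv (fun n => Rpower (INR (v' n)) (/ INR n)) a')
  (ha1 : 1 < a) (ha1' : 1 < a') :
  let c := ln a / ln a' in
  exists (f : nat -> nat) (r : nat -> nat),
    (forall n m, (n <= m)%nat -> (f n <= f m)%nat) /\
    (forall n m, (n < m)%nat -> (r n < r m)%nat) /\
    f 0%nat = 0%nat /\
    (exists M : R, forall n, INR (v' (f (r n))) / INR (v (r n)) <= M) /\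
    (exists eps : R, 0 < eps /\ forall n, eps <= INR (v' (f (r n))) / INR (v (r n))) /\
    (forall m : nat, exists N : nat, forall n : nat, (N <= n)%nat ->
       Rabs (INR (f (n + m)%nat) - INR (f n) - c * INR m) <= 1).
Proof.
  intros c.
  assert (Hv1 : forall n, (1 <= v n)%nat) by (intros n; exact (card_pos G S n _ (hv n))).
  assert (Hv1' : forall n, (1 <= v' n)%nat) by (intros n; exact (card_pos G' S' n _ (hv' n))).
  assert (Hvm : forall n m, (n <= m)%nat -> (v n <= v m)%nat)
    by (intros n m H; exact (card_mono G S n m _ _ H (hv n) (hv m))).
  assert (Hvm' : forall n m, (n <= m)%nat -> (v' n <= v' m)%nat)
    by (intros n m H; exact (card_mono G' S' n m _ _ H (hv' n) (hv' m))).
  assert (HvC : forall k, (v' (Datatypes.S k) <= (2 * length S' + 1) * v' k)%nat)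
    by (intros k; exact (card_step G' S' k _ _ (hv' k) (hv' (Datatypes.S k)))).
  assert (HL : 0 < ln a) by (rewrite <- ln_1; apply ln_increasing; lra).
  assert (HL' : 0 < ln a') by (rewrite <- ln_1; apply ln_increasing; lra).
  destruct (partA v v' (ln a) (ln a') Hv1 Hv1' Hvm Hvm' HL HL'
     (logcv v a Hv1 ha ltac:(lra)) (logcv v' a' Hv1' ha' ltac:(lra)))
     as [K [R0 [HK [HKm Hasy]]]].
  apply (partB v v' (2 * length S' + 1) c K R0 Hv1 Hv1'); auto.
  - unfold c. apply Rdiv_lt_0_compat; lra.
  - lia.
Qed.
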